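(* Let $(\mathbf A,G,H)$ be a tense Pavelka algebra whose underlying Pavelka algebra $\mathbf A$ is semisimple, and let $R\colon\mathrm{Spec_M}\mathbf A\times\mathrm{Spec_M}\mathbf A\to[0,1]$, $R(F,F')=\bigwedge_{a\in A}(G(a)/F'\rightarrow a/F)$, be its natural time frame relation. Then: (i) $R$ is reflexive if and only if $G(x)\le x$ for all $x\in A$ (equivalently, if and only if $H(x)\le x$ for all $x\in A$); (ii) $R$ is symmetric if and only if $H=G$; (iii) $R$ is transitive if and only if $G(x)\le G(G(x))$ for all $x\in A$ (equivalently, if and only if $H(x)\le H(H(x))$ for all $x\in A$).
   Context: An MV-algebra $(A;\oplus,\neg,0)$ carries derived operations $1=\neg0$, $x\cdot y=\neg(\neg x\oplus\neg y)$, $x\rightarrow y=\neg x\oplus y$, $x\wedge y$, $x\vee y$ (lattice operations of the order $x\le y$ iff $\neg x\oplus y=1$). The standard MV-algebra is $[0,1]$ with $x\oplus y=\min\{x+y,1\}$, $\neg x=1-x$. A Pavelka algebra is $\mathbf A=(A;\oplus,\neg,\{\mathbf r\mid r\in[0,1]\cap\mathbb Q\})$ with $(A;\oplus,\neg,\mathbf 0)$ an MV-algebra, $\mathbf r\oplus\mathbf s=\mathbf t$ whenever $\min\{r+s,1\}=t$, $\neg\mathbf r=\mathbf s$ whenever $1-r=s$. Filters are filters of the MV-reduct; $\mathrm{Spec_M}\mathbf A$ is the set of maximal proper filters; $\mathbf A/F$ embeds uniquely into $[0,1]$ and $x/F$ is identified with its image. Semisimple: MV-reduct is a subdirect product of simple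 MV-algebras. A tense Pavelka algebra is $(\mathbf A,G,H)$ with $G,H\colon A\to A$ such that for all $x,y$ and constants $\mathbf r$: (PT1) $G(x\wedge y)=G(x)\wedge G(y)$, $H(x\wedge y)=H(x)\wedge H(y)$; (PT2) $\mathbf r\rightarrow G(x)=G(\mathbf r\rightarrow x)$, $\mathbf r\rightarrow H(x)=H(\mathbf r\rightarrow x)$; (PT3) $\neg H(\neg G(x))\le x$, $\neg G(\neg H(x))\le x$. A fuzzy relation $R\colon T\times T\to[0,1]$ is reflexive if $R(t,t)=1$, symmetric if $R(s,t)=R(t,s)$, transitive if $R(s,t)\cdot R(t,u)\le R(s,u)$ for all $s,t,u$. *)

(* Defs.v *)
From Stdlib Require Import Reals QArith Qreals ClassicalEpsilon.
Open Scope R_scope.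

Record MVAlgebra := {
  mv_car :> Type;
  mv_oplus : mv_car -> mv_car -> mv_car;
  mv_neg : mv_car -> mv_car;
  mv_zero : mv_car;
  mv_assoc : forall x y z, mv_oplus x (mv_oplus y z) = mv_oplus (mv_oplus x y) z;
  mv_comm : forall x y, mv_oplus x y = mv_oplus y x;
  mv_zero_r : forall x, mv_oplus x mv_zero = x;
  mv_negneg : forall x, mv_neg (mv_neg x) = x;
  mv_one_abs : forall x, mv_oplus x (mv_neg mv_zero) = mv_neg mv_zero;
  mv_luk : forall x y,
    mv_oplus (mv_neg (mv_oplus (mv_neg x) y)) y
    = mv_oplus (mv_neg (mv_oplus (mv_neg y) x)) x
}.

Arguments mv_oplus {m}.
Arguments mv_neg {m}.
Arguments mv_zero {m}.

Section Derived.
Context {A : MVAlgebra}.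
Definition mv_one : A := mv_neg mv_zero.
Definition mv_mult (x y : A) : A := mv_neg (mv_oplus (mv_neg x) (mv_neg y)).
Definition mv_impl (x y : A) : A := mv_oplus (mv_neg x) y.
Definition mv_le (x y : A) : Prop := mv_impl x y = mv_one.
Definition mv_meet (x y : A) : A := mv_mult x (mv_impl x y).
Definition mv_join (x y : A) : A := mv_oplus (mv_neg (mv_oplus (mv_neg x) y)) y.

Definition is_filter (F : A -> Prop) : Prop :=
  F mv_one /\
  (forall x y, F x -> F y -> F (mv_mult x y)) /\
  (forall x y, F x -> mv_le x y -> F y).
Definition proper_filter (F : A -> Prop) : Prop := is_filter F /\ ~ F mv_zero.
Definition maximal_filter (F : A -> Prop) : Prop :=
  proper_filter F /\
  forall F' : A -> Prop, proper_filter F' -> (forall x, F x -> F' x) ->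
    forall x, F' x -> F x.
End Derived.

Definition mv_hom (A B : MVAlgebra) (h : A -> B) : Prop :=
  (forall x y, h (mv_oplus x y) = mv_oplus (h x) (h y)) /\
  (forall x, h (mv_neg x) = mv_neg (h x)) /\
  h mv_zero = mv_zero.

Definition mv_simple (B : MVAlgebra) : Prop :=
  (mv_zero : B) <> mv_one /\
  forall F : B -> Prop, is_filter F ->
    (forall x, F x <-> x = mv_one) \/ (forall x, F x).

(* semisimple: isomorphic to a subdirect product of simple MV-algebras *)
Definition mv_semisimple (A : MVAlgebra) : Prop :=
  exists (I : Type) (B : I -> MVAlgebra) (h : forall i, A -> B i),
    (forall i, mv_simple (B i)) /\
    (forall i, mv_hom A (B i) (h i)) /\
    (forall i, forall b : B i, exists a, h i a = b) /\
    (forall a a' : A, (forall i, h i a = h i a') -> a = a').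

Definition std_oplus (x y : R) : R := Rmin (x + y) 1.
Definition std_neg (x : R) : R := 1 - x.
Definition std_impl (x y : R) : R := Rmin (1 - x + y) 1.
Definition std_mult (x y : R) : R := Rmax (x + y - 1) 0.

Definition unitQ (r : Q) : Prop := 0 <= Q2R r <= 1.

Record PavelkaAlgebra := {
  pv_mv :> MVAlgebra;
  pv_const : Q -> pv_mv;
  pv_const0 : pv_const 0%Q = mv_zero;
  pv_const_oplus : forall r s t, unitQ r -> unitQ s -> unitQ t ->
    Rmin (Q2R r + Q2R s) 1 = Q2R t ->
    mv_oplus (pv_const r) (pv_const s) = pv_const t;
  pv_const_neg : forall r s, unitQ r -> unitQ s ->
    1 - Q2R r = Q2R s -> mv_neg (pv_const r) = pv_const s
}.

Definition tense (A : PavelkaAlgebra) (G H : A -> A) : Prop :=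
  (forall x y, G (mv_meet x y) = mv_meet (G x) (G y)) /\
  (forall x y, H (mv_meet x y) = mv_meet (H x) (H y)) /\
  (forall r x, unitQ r -> mv_impl (pv_const A r) (G x) = G (mv_impl (pv_const A r) x)) /\
  (forall r x, unitQ r -> mv_impl (pv_const A r) (H x) = H (mv_impl (pv_const A r) x)) /\
  (forall x, mv_le (mv_neg (H (mv_neg (G x)))) x) /\
  (forall x, mv_le (mv_neg (G (mv_neg (H x)))) x).

Definition SpecM (A : MVAlgebra) : Type := { F : A -> Prop | maximal_filter F }.

(* x/F : the value of x under the (unique) embedding of A/F into [0,1],
   i.e. the MV-homomorphism h : A -> [0,1] with h^{-1}(1) = F. *)
Definition std_hom_with_kernel {A : MVAlgebra} (F : A -> Prop) (h : A -> R) : Prop :=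
  (forall x, 0 <= h x <= 1) /\
  (forall x y, h (mv_oplus x y) = std_oplus (h x) (h y)) /\
  (forall x, h (mv_neg x) = std_neg (h x)) /\
  h mv_zero = 0 /\
  (forall x, F x <-> h x = 1).

Definition quot_val {A : MVAlgebra} (F : SpecM A) : A -> R :=
  epsilon (inhabits (fun _ : A => 0)) (std_hom_with_kernel (proj1_sig F)).

Definition is_inf (S : R -> Prop) (m : R) : Prop :=
  (forall x, S x -> m <= x) /\ (forall m', (forall x, S x -> m' <= x) -> m' <= m).
Definition Rinf (S : R -> Prop) : R := epsilon (inhabits 0) (is_inf S).

Definition frame_rel {A : PavelkaAlgebra} (G : A -> A) (F F' : SpecM A) : R :=
  Rinf (fun v => exists a : A, v = std_impl (quot_val F' (G a)) (quot_val F a)).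

Definition fz_reflexive {T : Type} (Rl : T -> T -> R) : Prop := forall t, Rl t t = 1.
Definition fz_symmetric {T : Type} (Rl : T -> T -> R) : Prop := forall s t, Rl s t = Rl t s.
Definition fz_transitive {T : Type} (Rl : T -> T -> R) : Prop :=
  forall s t u, std_mult (Rl s t) (Rl t u) <= Rl s u.

(* Main.v *)
Require Import Defs.
From Stdlib Require Import Reals QArith Qreals ClassicalEpsilon.
From Stdlib Require Import Lra Lia List ZArith PArith.
From Stdlib Require Import FunctionalExtensionality PropExtensionality Classical.


Arguments mv_assoc {m}. Arguments mv_comm {m}. Arguments mv_zero_r {m}.
Arguments mv_negneg {m}. Arguments mv_one_abs {m}. Arguments mv_luk {m}.
Section MV.
Context {A : MVAlgebra}.
Implicit Types x y z a b c u v w : A.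
Local Notation "x ⊕ y" := (@mv_oplus A x y) (at level 50, left associativity).
Local Notation "¬ x" := (@mv_neg A x) (at level 35, right associativity).
Local Notation O0 := (@mv_zero A).
Local Notation I1 := (@mv_one A).

Lemma zero_l x : O0 ⊕ x = x.
Proof. rewrite mv_comm. apply mv_zero_r. Qed.
Lemma one_r x : x ⊕ I1 = I1.
Proof. apply mv_one_abs. Qed.
Lemma one_l x : I1 ⊕ x = I1.
Proof. rewrite mv_comm. apply one_r. Qed.
Lemma neg_one : ¬ I1 = O0.
Proof. unfold mv_one. apply mv_negneg. Qed.
Lemma compl_l x : ¬ x ⊕ x = I1.
Proof.
  pose proof (mv_luk x I1) as H. rewrite one_r in H. rewrite neg_one, zero_l in H.
  now rewrite <- H.
Qed.
Lemma compl_r x : x ⊕ ¬ x = I1.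
Proof. rewrite mv_comm. apply compl_l. Qed.

Lemma le_refl x : mv_le x x.
Proof. unfold mv_le, mv_impl. apply compl_l. Qed.

Lemma join_comm x y : mv_join x y = mv_join y x.
Proof. apply mv_luk. Qed.

Lemma le_join x y : mv_le x y -> mv_join x y = y.
Proof. unfold mv_le, mv_impl, mv_join. intros H. rewrite H, neg_one. apply zero_l. Qed.

Lemma le_antisym x y : mv_le x y -> mv_le y x -> x = y.
Proof. intros H1 H2. rewrite <- (le_join _ _ H1), join_comm. symmetry. now apply le_join. Qed.

Lemma le_oplus x z : mv_le x (x ⊕ z).
Proof. unfold mv_le, mv_impl. rewrite mv_assoc, compl_l. apply one_l. Qed.
Lemma le_oplus' x z : mv_le x (z ⊕ x).
Proof. rewrite mv_comm. apply le_oplus. Qed.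

Lemma le_decomp x y : mv_le x y -> y = x ⊕ ¬ (¬ y ⊕ x).
Proof. intros H. rewrite <- (le_join _ _ H) at 1. rewrite join_comm. unfold mv_join. apply mv_comm. Qed.

Lemma le_trans x y z : mv_le x y -> mv_le y z -> mv_le x z.
Proof.
  intros H1 H2. rewrite (le_decomp _ _ H2), (le_decomp _ _ H1).
  rewrite <- mv_assoc. apply le_oplus.
Qed.

Lemma oplus_mono_l x y z : mv_le x y -> mv_le (x ⊕ z) (y ⊕ z).
Proof.
  intros H. rewrite (le_decomp _ _ H).
  set (w := ¬ (¬ y ⊕ x)).
  replace (x ⊕ w ⊕ z) with (x ⊕ z ⊕ w). apply le_oplus.
  rewrite <- !mv_assoc. f_equal. apply mv_comm.
Qed.
Lemma oplus_mono_r x y z : mv_le x y -> mv_le (z ⊕ x) (z ⊕ y).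
Proof. intros H. rewrite (mv_comm z x), (mv_comm z y). now apply oplus_mono_l. Qed.
Lemma oplus_mono x y x' y' : mv_le x y -> mv_le x' y' -> mv_le (x ⊕ x') (y ⊕ y').
Proof. intros; eapply le_trans. apply oplus_mono_l; eauto. now apply oplus_mono_r. Qed.

Lemma neg_anti x y : mv_le x y -> mv_le (¬ y) (¬ x).
Proof. unfold mv_le, mv_impl. rewrite mv_negneg, mv_comm. auto. Qed.
Lemma neg_anti' x y : mv_le (¬ y) (¬ x) -> mv_le x y.
Proof. intros H. apply neg_anti in H. now rewrite !mv_negneg in H. Qed.

Lemma le_one x : mv_le x I1.
Proof. unfold mv_le, mv_impl. apply one_r. Qed.
Lemma zero_le x : mv_le O0 x.
Proof. unfold mv_le, mv_impl. fold (@mv_one A). apply one_l. Qed.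
Lemma le_zero x : mv_le x O0 -> x = O0.
Proof. intros H. apply le_antisym; auto using zero_le. Qed.
Lemma one_le x : mv_le I1 x -> x = I1.
Proof. intros H. apply le_antisym; auto using le_one. Qed.

Lemma mult_comm x y : mv_mult x y = mv_mult y x.
Proof. unfold mv_mult. now rewrite mv_comm. Qed.
Lemma mult_assoc x y z : mv_mult x (mv_mult y z) = mv_mult (mv_mult x y) z.
Proof. unfold mv_mult. rewrite !mv_negneg. now rewrite mv_assoc. Qed.
Lemma mult_one_r x : mv_mult x I1 = x.
Proof. unfold mv_mult, mv_one. rewrite mv_negneg, mv_zero_r. apply mv_negneg. Qed.
Lemma mult_one_l x : mv_mult I1 x = x.
Proof. rewrite mult_comm. apply mult_one_r. Qed.
Lemma mult_zero_r x : mv_mult x O0 = O0.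
Proof. unfold mv_mult. fold (@mv_one A). rewrite one_r. apply neg_one. Qed.
Lemma mult_zero_l x : mv_mult O0 x = O0.
Proof. rewrite mult_comm. apply mult_zero_r. Qed.
Lemma mult_compl x : mv_mult x (¬ x) = O0.
Proof. unfold mv_mult. rewrite mv_negneg, compl_l. apply neg_one. Qed.

Lemma mult_mono_l x y z : mv_le x y -> mv_le (mv_mult x z) (mv_mult y z).
Proof. intros H. unfold mv_mult. apply neg_anti, oplus_mono_l, neg_anti, H. Qed.
Lemma mult_mono_r x y z : mv_le x y -> mv_le (mv_mult z x) (mv_mult z y).
Proof. intros H. rewrite (mult_comm z x), (mult_comm z y). now apply mult_mono_l. Qed.
Lemma mult_mono x y x' y' : mv_le x y -> mv_le x' y' -> mv_le (mv_mult x x') (mv_mult y y').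
Proof. intros; eapply le_trans. apply mult_mono_l; eauto. now apply mult_mono_r. Qed.

Lemma residuation x y z : mv_le (mv_mult x y) z <-> mv_le x (¬ y ⊕ z).
Proof. unfold mv_le, mv_impl, mv_mult. rewrite mv_negneg, mv_assoc. tauto. Qed.

Lemma mult_le_l x y : mv_le (mv_mult x y) x.
Proof. apply residuation. apply le_oplus'. Qed.
Lemma mult_le_r x y : mv_le (mv_mult x y) y.
Proof. rewrite mult_comm. apply mult_le_l. Qed.

Lemma join_ub_r x y : mv_le y (mv_join x y).
Proof. unfold mv_join. apply le_oplus'. Qed.
Lemma join_ub_l x y : mv_le x (mv_join x y).
Proof. rewrite join_comm. apply join_ub_r. Qed.
Lemma join_lub x y t : mv_le x t -> mv_le y t -> mv_le (mv_join x y) t.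
Proof.
  intros H1 H2. apply le_trans with (mv_join t y).
  - unfold mv_join. apply oplus_mono_l, neg_anti, oplus_mono_l, neg_anti, H1.
  - rewrite join_comm, (le_join _ _ H2). apply le_refl.
Qed.

Lemma mult_join_distr z x y : mv_mult z (mv_join x y) = mv_join (mv_mult z x) (mv_mult z y).
Proof.
  apply le_antisym.
  - rewrite mult_comm. apply residuation. apply join_lub; apply residuation; rewrite mult_comm.
    apply join_ub_l. apply join_ub_r.
  - apply join_lub; apply mult_mono_r. apply join_ub_l. apply join_ub_r.
Qed.

Lemma impl_elim a b : mv_le (mv_mult a (mv_impl a b)) b.
Proof. rewrite mult_comm. apply residuation. apply le_refl. Qed.

Lemma Klemma a b : (a ⊕ b) ⊕ mv_mult a b = a ⊕ b.
Proof.
  set (s := a ⊕ b).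
  assert (Hmc : mv_mult (¬ a ⊕ ¬ b) b = mv_mult (b ⊕ a) (¬ a)).
  { pose proof (f_equal (@mv_neg A) (mv_luk a (¬ b))) as H.
    unfold mv_mult. rewrite !mv_negneg in *. exact H. }
  assert (Hs : s = mv_mult s (¬ a) ⊕ a).
  { assert (Hle : mv_le a s) by apply le_oplus.
    rewrite <- (le_join _ _ Hle) at 1. rewrite join_comm. unfold mv_join, mv_mult.
    now rewrite mv_negneg. }
  assert (Hm : mv_mult s (¬ a) = mv_mult (¬ a ⊕ ¬ b) b).
  { rewrite Hmc. unfold s. now rewrite mv_comm. }
  rewrite Hs at 1. rewrite Hm.
  rewrite (mv_comm _ a), <- mv_assoc.
  assert (Hj : mv_mult (¬ a ⊕ ¬ b) b ⊕ mv_mult a b = mv_join b (mv_mult a b)).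
  { unfold mv_join, mv_mult. f_equal. f_equal. apply mv_comm. }
  rewrite Hj, join_comm, le_join by apply mult_le_r. reflexivity.
Qed.

Lemma prelin x y : mv_join (mv_impl x y) (mv_impl y x) = I1.
Proof.
  unfold mv_join, mv_impl.
  assert (E : ¬ (¬ x ⊕ y) ⊕ (¬ y ⊕ x) = ¬ y ⊕ x).
  { pose proof (Klemma x (¬ y)) as K. unfold mv_mult in K. rewrite mv_negneg in K.
    rewrite (mv_comm (¬ y) x), mv_comm. exact K. }
  rewrite E. apply compl_l.
Qed.

Fixpoint pw (x : A) (n : nat) : A :=
  match n with O => I1 | S n => mv_mult x (pw x n) end.

Lemma pw_add x n m : pw x (n + m) = mv_mult (pw x n) (pw x m).
Proof.
  induction n; simpl. now rewrite mult_one_l. rewrite IHn. apply mult_assoc.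
Qed.
Lemma pw_mono x y n : mv_le x y -> mv_le (pw x n) (pw y n).
Proof. intros H; induction n; simpl. apply le_refl. now apply mult_mono. Qed.
Lemma pw_anti x n m : (n <= m)%nat -> mv_le (pw x m) (pw x n).
Proof.
  intros H. replace m with (n + (m - n))%nat by lia. rewrite pw_add. apply mult_le_l.
Qed.

Lemma join_pw_l u v n : mv_join u v = I1 -> mv_join (pw u n) v = I1.
Proof.
  intros H. induction n; simpl.
  - apply one_le. apply join_ub_l.
  - apply one_le. rewrite <- (mult_one_r I1). rewrite <- H at 1. rewrite <- IHn.
    rewrite mult_join_distr. apply join_lub.
    + rewrite mult_comm, mult_join_distr. apply join_lub.
      * rewrite mult_comm. apply join_ub_l.
      * eapply le_trans. apply mult_le_r. apply join_ub_r.
    + eapply le_trans. apply mult_le_r. apply join_ub_r.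
Qed.
Lemma join_pw u v n m : mv_join u v = I1 -> mv_join (pw u n) (pw v m) = I1.
Proof.
  intros H. apply join_pw_l. rewrite join_comm. apply join_pw_l. now rewrite join_comm.
Qed.
Lemma join_zero : mv_join O0 O0 = O0.
Proof. unfold mv_join. fold (@mv_one A). rewrite one_l, neg_one. apply zero_l. Qed.

Lemma disj_zero u v g n : mv_join u v = I1 -> mv_mult g (pw u n) = O0 -> mv_mult g (pw v n) = O0 -> g = O0.
Proof.
  intros H H1 H2. rewrite <- (mult_one_r g). rewrite <- (join_pw u v n n H).
  rewrite mult_join_distr, H1, H2. apply join_zero.
Qed.

Lemma impl_trans a b c : mv_le (mv_mult (mv_impl a b) (mv_impl b c)) (mv_impl a c).
Proof.
  unfold mv_impl at 3. rewrite <- residuation.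
  rewrite mult_comm, mult_assoc. eapply le_trans. apply mult_mono_l. apply impl_elim.
  apply impl_elim.
Qed.

Lemma impl_oplus a b c : mv_le (mv_impl a b) (mv_impl (a ⊕ c) (b ⊕ c)).
Proof.
  unfold mv_impl at 2. rewrite <- residuation. rewrite mult_comm. apply residuation.
  rewrite mv_assoc. apply oplus_mono_l. apply join_ub_l.
Qed.

Lemma impl_neg a b : mv_impl a b = mv_impl (¬ b) (¬ a).
Proof. unfold mv_impl. rewrite mv_negneg. apply mv_comm. Qed.

Lemma mult4 (p q r s : A) : mv_mult (mv_mult p q) (mv_mult r s) = mv_mult (mv_mult p r) (mv_mult q s).
Proof.
  rewrite mult_assoc. rewrite <- (mult_assoc p q r), (mult_comm q r), mult_assoc.
  rewrite <- mult_assoc. reflexivity.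
Qed.

Lemma impl_mult a b c d : mv_le (mv_mult (mv_impl a b) (mv_impl c d)) (mv_impl (mv_mult a c) (mv_mult b d)).
Proof.
  unfold mv_impl at 3. rewrite <- residuation.
  replace (mv_mult (mv_mult (mv_impl a b) (mv_impl c d)) (mv_mult a c))
    with (mv_mult (mv_mult a (mv_impl a b)) (mv_mult c (mv_impl c d))).
  - apply mult_mono; apply impl_elim.
  - rewrite mult4. apply mult_comm.
Qed.

Lemma impl_pw a b n : mv_le (pw (mv_impl a b) n) (mv_impl (pw a n) (pw b n)).
Proof.
  induction n; simpl.
  - unfold mv_impl. rewrite compl_l. apply le_refl.
  - eapply le_trans. apply mult_mono_r. apply IHn. apply impl_mult.
Qed.

Lemma impl_one_l x : mv_impl I1 x = x.
Proof. unfold mv_impl. rewrite neg_one. apply zero_l. Qed.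
Lemma impl_zero_r x : mv_impl x O0 = ¬ x.
Proof. unfold mv_impl. apply mv_zero_r. Qed.
Lemma le_impl_one x y : mv_le x y <-> mv_impl x y = I1.
Proof. reflexivity. Qed.

End MV.


Section Filt.
Context {A : MVAlgebra}.

Lemma filter_one (F : A -> Prop) : is_filter F -> F mv_one.
Proof. intros [H _]; exact H. Qed.
Lemma filter_mult (F : A -> Prop) (x y : A) : is_filter F -> F x -> F y -> F (mv_mult x y).
Proof. intros [_ [H _]]; auto. Qed.
Lemma filter_up (F : A -> Prop) (x y : A) : is_filter F -> F x -> mv_le x y -> F y.
Proof. intros [_ [_ H]]; eauto. Qed.
Lemma filter_pw (F : A -> Prop) (x : A) n : is_filter F -> F x -> F (pw x n).
Proof. intros Hf Hx; induction n; simpl. now apply filter_one. now apply filter_mult. Qed.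

Definition genf (F : A -> Prop) (u : A) : A -> Prop :=
  fun z => exists f n, F f /\ mv_le (mv_mult f (pw u n)) z.

Lemma genf_filter (F : A -> Prop) (u : A) : is_filter F -> is_filter (genf F u).
Proof.
  intros Hf. split; [|split].
  - exists mv_one, 0%nat. split. now apply filter_one. simpl. rewrite mult_one_l. apply le_refl.
  - intros x y [f [n [Hf1 H1]]] [g [m [Hg1 H2]]]. exists (mv_mult f g), (n + m)%nat. split.
    now apply filter_mult. rewrite pw_add, mult4. now apply mult_mono.
  - intros x y [f [n [Hf1 H1]]] Hxy. exists f, n. split; auto. eapply le_trans; eauto.
Qed.

Lemma max_not_in (F : A -> Prop) (u : A) : maximal_filter F -> ~ F u ->
  exists f n, F f /\ mv_mult f (pw u n) = mv_zero.
Proof.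
  intros [[Hf Hp] Hmax] Hu.
  destruct (classic (genf F u mv_zero)) as [[f [n [H1 H2]]]|H].
  - exists f, n. split; auto. now apply le_zero.
  - exfalso. apply Hu. apply (Hmax (genf F u)).
    + split; auto. now apply genf_filter.
    + intros x Hx. exists x, 0%nat. split; auto. simpl. rewrite mult_one_r. apply le_refl.
    + exists mv_one, 1%nat. split. now apply filter_one. simpl. rewrite mult_one_r, mult_one_l. apply le_refl.
Qed.

Lemma max_prime (F : A -> Prop) (a b : A) : maximal_filter F -> F (mv_impl a b) \/ F (mv_impl b a).
Proof.
  intros HF. destruct (classic (F (mv_impl a b))) as [H1|H1]; auto.
  destruct (classic (F (mv_impl b a))) as [H2|H2]; auto. exfalso.
  destruct (max_not_in _ _ HF H1) as [f [n [Hf Hfe]]].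
  destruct (max_not_in _ _ HF H2) as [g [m [Hg Hge]]].
  destruct HF as [[HFf HFp] _]. apply HFp.
  assert (E : mv_mult f g = mv_zero).
  { apply (disj_zero (mv_impl a b) (mv_impl b a) _ (n + m)). apply prelin.
    - apply le_zero. rewrite <- Hfe. rewrite (mult_comm f g), <- mult_assoc. eapply le_trans.
      apply mult_le_r. apply mult_mono_r. apply pw_anti. lia.
    - apply le_zero. rewrite <- Hge. rewrite <- mult_assoc. eapply le_trans.
      apply mult_le_r. apply mult_mono_r. apply pw_anti. lia. }
  rewrite <- E. now apply filter_mult.
Qed.

Section Zorn.
Variable Phi0 : A -> Prop.
Hypothesis HPhi0 : proper_filter Phi0.

Definition sub (P Q : A -> Prop) := forall x, P x -> Q x.
Definition Pp (Psi : A -> Prop) := proper_filter Psi /\ sub Phi0 Psi.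
Definition bigger (Psi Psi' : A -> Prop) := sub Psi Psi' /\ Pp Psi' /\ exists x, Psi' x /\ ~ Psi x.

Definition nextf (Psi : A -> Prop) : A -> Prop :=
  match excluded_middle_informative (exists Psi', bigger Psi Psi') with
  | left h => proj1_sig (constructive_indefinite_description _ h)
  | right _ => Psi
  end.

Lemma next_sub Psi : sub Psi (nextf Psi).
Proof.
  unfold nextf. destruct excluded_middle_informative as [h|h].
  - destruct constructive_indefinite_description as [P' HP]. simpl. apply HP.
  - intros x Hx; exact Hx.
Qed.
Lemma next_big Psi : (exists Psi', bigger Psi Psi') -> bigger Psi (nextf Psi).
Proof.
  intros h0. unfold nextf. destruct excluded_middle_informative as [h|h].
  - destruct constructive_indefinite_description as [P' HP]. simpl. apply HP.
  - contradiction.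
Qed.
Lemma next_none Psi : ~ (exists Psi', bigger Psi Psi') -> nextf Psi = Psi.
Proof.
  intros h0. unfold nextf. destruct excluded_middle_informative as [h|h]; auto. contradiction.
Qed.

Definition Unn (C : (A -> Prop) -> Prop) : A -> Prop := fun x => Phi0 x \/ exists Psi, C Psi /\ Psi x.

Inductive Tw : (A -> Prop) -> Prop :=
| tw_next Psi : Tw Psi -> Tw (nextf Psi)
| tw_sup (C : (A -> Prop) -> Prop) : (forall Psi, C Psi -> Tw Psi) -> Tw (Unn C).

Lemma pred_ext (P Q : A -> Prop) : sub P Q -> sub Q P -> P = Q.
Proof.
  intros H1 H2. apply functional_extensionality. intros x. apply propositional_extensionality. split; auto.
Qed.

Lemma tw_base Psi : Tw Psi -> sub Phi0 Psi.
Proof.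
  induction 1. intros x Hx. apply next_sub. auto. intros x Hx. left. auto.
Qed.

Definition extr (c : A -> Prop) := forall x, Tw x -> sub x c -> ~ sub c x -> sub (nextf x) c.

Lemma lemA c : Tw c -> extr c -> forall x, Tw x -> sub x c \/ sub (nextf c) x.
Proof.
  intros Tc Ec x Tx. induction Tx as [y Ty IH|C HC IH].
  - destruct IH as [H|H].
    + destruct (classic (sub c y)) as [H'|H'].
      * assert (y = c) by (apply pred_ext; auto). subst. right. intros z Hz; auto.
      * left. apply Ec; auto.
    + right. intros z Hz. apply next_sub. auto.
  - destruct (classic (exists Psi, C Psi /\ sub (nextf c) Psi)) as [[Psi [HP1 HP2]]|HN].
    + right. intros z Hz. right. exists Psi. split; auto.
    + left. intros z [Hz|[Psi [HP Hz]]].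
      * now apply (tw_base c Tc).
      * destruct (IH Psi HP) as [H|H]. auto. exfalso. apply HN. exists Psi. auto.
Qed.

Lemma lemB c : Tw c -> extr c.
Proof.
  induction 1 as [y Ty IH|C HC IH].
  - intros x Tx H1 H2. destruct (lemA y Ty IH x Tx) as [H|H].
    + destruct (classic (sub y x)) as [H'|H'].
      * assert (x = y) by (apply pred_ext; auto). subst. intros z Hz; auto.
      * intros z Hz. apply next_sub. apply (IH x Tx H H'). auto.
    + exfalso. auto.
  - intros x Tx H1 H2.
    destruct (classic (exists Psi, C Psi /\ ~ sub Psi x)) as [[Psi [HP HPx]]|HN].
    + destruct (lemA Psi (HC Psi HP) (IH Psi HP) x Tx) as [H|H].
      * intros z Hz. right. exists Psi. split; auto. apply (IH Psi HP x Tx H HPx). auto.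
      * exfalso. apply HPx. intros z Hz. apply H, next_sub, Hz.
    + exfalso. apply H2. intros z [Hz|[Psi [HP Hz]]].
      * now apply (tw_base x Tx).
      * destruct (classic (sub Psi x)) as [h|h]. auto. exfalso. apply HN. eauto.
Qed.

Lemma tw_chain x y : Tw x -> Tw y -> sub x y \/ sub y x.
Proof.
  intros Tx Ty. destruct (lemA y Ty (lemB y Ty) x Tx) as [H|H]; auto.
  right. intros z Hz. apply H, next_sub, Hz.
Qed.

Lemma tw_Pp Psi : Tw Psi -> Pp Psi.
Proof.
  induction 1 as [y Ty IH|C HC IH].
  - destruct (classic (exists Psi', bigger y Psi')) as [h|h].
    + apply next_big in h. apply h.
    + rewrite next_none; auto.
  - destruct HPhi0 as [Hf0 Hp0].
    assert (Hall : forall P, C P -> sub Phi0 P) by (intros P HP; apply (IH P HP)).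
    split; [split; [split; [|split]|]|].
    + left. now apply filter_one.
    + intros x y Hx Hy.
      assert (Hx' : exists P, (P = Phi0 \/ C P) /\ P x) by (destruct Hx as [h|[P [h1 h2]]]; eauto).
      assert (Hy' : exists P, (P = Phi0 \/ C P) /\ P y) by (destruct Hy as [h|[P [h1 h2]]]; eauto).
      destruct Hx' as [P [HP1 HP2]]. destruct Hy' as [Q [HQ1 HQ2]].
      assert (TP : P = Phi0 \/ (C P /\ Tw P)) by (destruct HP1; auto).
      assert (TQ : Q = Phi0 \/ (C Q /\ Tw Q)) by (destruct HQ1; auto).
      destruct TP as [->|[CP TP]]; destruct TQ as [->|[CQ TQ]].
      * left. now apply filter_mult.
      * right. exists Q. split; auto. destruct (IH Q CQ) as [[FQ _] _].
        apply filter_mult; auto. now apply (Hall Q CQ).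
      * right. exists P. split; auto. destruct (IH P CP) as [[FP _] _].
        apply filter_mult; auto. now apply (Hall P CP).
      * destruct (tw_chain P Q TP TQ) as [h|h].
        -- right. exists Q. split; auto. destruct (IH Q CQ) as [[FQ _] _]. apply filter_mult; auto.
        -- right. exists P. split; auto. destruct (IH P CP) as [[FP _] _]. apply filter_mult; auto.
    + intros x y [Hx|[P [HP Hx]]] Hxy.
      * left. eapply filter_up; eauto.
      * right. exists P. split; auto. destruct (IH P HP) as [[FP _] _]. eapply filter_up; eauto.
    + intros [H|[P [HP H]]]. auto. destruct (IH P HP) as [[_ NP] _]. auto.
    + intros x Hx. left. auto.
Qed.

Lemma zorn_filter : exists F, maximal_filter F /\ sub Phi0 F.
Proof.
  set (M := Unn Tw).
  assert (TM : Tw M) by (apply tw_sup; auto).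
  destruct (tw_Pp M TM) as [PM SM].
  exists M. split; [split|]; auto.
  intros F' HF' Hsub x Hx. apply NNPP. intros Hnx.
  assert (Hb : exists Psi', bigger M Psi') by (exists F'; split; [exact Hsub|split; [split; [exact HF'| intros z Hz; apply Hsub, SM, Hz] | exists x; auto]]).
  apply next_big in Hb. destruct Hb as [_ [_ [z [Hz1 Hz2]]]].
  apply Hz2. right. exists (nextf M). split; auto. apply tw_next, TM.
Qed.
End Zorn.

End Filt.

Open Scope R_scope.
Open Scope R_scope.

Ltac rmm := unfold std_oplus, std_neg, std_impl, std_mult in *; unfold Rmin, Rmax in *; repeat destruct Rle_dec; lra.

Definition rat01 (r : R) : Prop := exists q : Q, unitQ q /\ Q2R q = r.

Lemma rat01_range r : rat01 r -> 0 <= r <= 1.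
Proof. intros [q [H1 H2]]. unfold unitQ in H1. subst; auto. Qed.

Lemma Q2R_0 : Q2R 0%Q = 0.
Proof. unfold Q2R. simpl. lra. Qed.
Lemma Q2R_1 : Q2R 1%Q = 1.
Proof. unfold Q2R. simpl. lra. Qed.

Lemma rat01_0 : rat01 0.
Proof. exists 0%Q. unfold unitQ. rewrite Q2R_0. repeat split; try lra. Qed.
Lemma rat01_1 : rat01 1.
Proof. exists 1%Q. unfold unitQ. rewrite Q2R_1. repeat split; try lra. Qed.
Lemma rat01_neg r : rat01 r -> rat01 (1 - r).
Proof.
  intros [q [Hq E]]. exists (1 - q)%Q. unfold unitQ in *. rewrite !Q2R_minus, !Q2R_1. repeat split; lra.
Qed.
Lemma rat01_oplus r s : rat01 r -> rat01 s -> rat01 (Rmin (r + s) 1).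
Proof.
  intros [q [Hq E]] [p [Hp F]]. unfold unitQ in *. unfold Rmin. destruct Rle_dec.
  - exists (q + p)%Q. unfold unitQ. rewrite !Q2R_plus. repeat split; lra.
  - apply rat01_1.
Qed.
Lemma rat01_mult r s : rat01 r -> rat01 s -> rat01 (Rmax (r + s - 1) 0).
Proof.
  intros [q [Hq E]] [p [Hp F]]. unfold unitQ in *. unfold Rmax. destruct Rle_dec.
  - apply rat01_0.
  - exists (q + p - 1)%Q. unfold unitQ. rewrite !Q2R_minus, !Q2R_plus, !Q2R_1. repeat split; lra.
Qed.

Definition qkn (k n : nat) : Q := Qmake (Z.of_nat k) (Pos.of_nat n).
Lemma Q2R_qkn k n : (0 < n)%nat -> Q2R (qkn k n) = INR k / INR n.
Proof.
  intros Hn. unfold Q2R, qkn. simpl. rewrite <- INR_IZR_INZ.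
  replace (IZR (Z.pos (Pos.of_nat n))) with (INR n). reflexivity.
  rewrite INR_IZR_INZ. f_equal. rewrite <- (Nat2Pos.id n) at 1 by lia. apply positive_nat_Z.
Qed.
Lemma rat01_kn k n : (0 < n)%nat -> (k <= n)%nat -> rat01 (INR k / INR n).
Proof.
  intros Hn Hk. exists (qkn k n). rewrite Q2R_qkn by auto. split; auto. unfold unitQ.
  rewrite Q2R_qkn by auto. apply lt_0_INR in Hn. apply le_INR in Hk. split.
  apply Rmult_le_pos. apply pos_INR. left. now apply Rinv_0_lt_compat.
  apply Rmult_le_reg_r with (INR n); auto. unfold Rdiv. rewrite Rmult_assoc, Rinv_l by lra. lra.
Qed.

Lemma rat01_inv r : rat01 r -> exists k n, (0 < n)%nat /\ (k <= n)%nat /\ r = INR k / INR n.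
Proof.
  intros [q [Hq E]]. destruct q as [a b]. unfold unitQ, Q2R in *. simpl in *.
  assert (Hb : 0 < IZR (Z.pos b)) by (apply IZR_lt; lia).
  assert (Ha : (0 <= a)%Z).
  { destruct (Z_le_gt_dec 0 a) as [h|h]; auto. exfalso. apply Z.gt_lt in h. apply IZR_lt in h.
    assert (IZR a * / IZR (Z.pos b) < 0). { apply Rmult_neg_pos; auto. now apply Rinv_0_lt_compat. }
    lra. }
  exists (Z.to_nat a), (Pos.to_nat b). split. lia.
  assert (Eb : INR (Pos.to_nat b) = IZR (Z.pos b)).
  { rewrite INR_IZR_INZ. f_equal. apply positive_nat_Z. }
  assert (Ea : INR (Z.to_nat a) = IZR a).
  { rewrite INR_IZR_INZ. f_equal. apply Z2Nat.id; auto. }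
  split.
  - apply INR_le. rewrite Ea, Eb. destruct Hq as [_ Hq1].
    apply Rmult_le_reg_r with (/ IZR (Z.pos b)). now apply Rinv_0_lt_compat. rewrite Rinv_r; lra.
  - rewrite Ea, Eb. now subst.
Qed.

Lemma density lo hi : lo < hi -> 0 <= hi -> hi <= 1 -> exists r, rat01 r /\ lo < r /\ r <= hi.
Proof.
  intros H1 H2 H3.
  destruct (archimed (/ (hi - lo))) as [Hn _].
  set (n := Z.to_nat (up (/ (hi - lo)))).
  assert (Hpos : 0 < / (hi - lo)) by (apply Rinv_0_lt_compat; lra).
  assert (Hup : (0 < up (/ (hi - lo)))%Z) by (apply lt_IZR; lra).
  assert (En : INR n = IZR (up (/ (hi - lo)))) by (unfold n; rewrite INR_IZR_INZ; f_equal; apply Z2Nat.id; lia).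
  assert (Hn0 : (0 < n)%nat) by lia.
  assert (HnR : 0 < INR n) by (apply lt_0_INR; auto).
  assert (Hgap : 1 / INR n < hi - lo).
  { assert (Hm : 1 < (hi - lo) * INR n).
    { assert ((hi - lo) * / (hi - lo) = 1) by (field; lra). rewrite En. nra. }
    unfold Rdiv. apply Rmult_lt_reg_r with (INR n); auto. rewrite Rmult_assoc, Rinv_l by lra. lra. }
  destruct (archimed (hi * INR n)) as [Hz1 Hz2].
  set (z := up (hi * INR n)) in *.
  assert (Hz : (1 <= z)%Z). { apply le_IZR. assert (0 <= hi * INR n) by (apply Rmult_le_pos; lra). 
    assert (IZR z > 0) by lra. assert (0 < z)%Z by (apply lt_IZR; lra). apply IZR_le. lia. }
  set (k := Z.to_nat (z - 1)).
  assert (Ek : INR k = IZR z - 1).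
  { unfold k. rewrite INR_IZR_INZ, Z2Nat.id by lia. rewrite minus_IZR. reflexivity. }
  assert (Hk : (k <= n)%nat).
  { apply INR_le. rewrite Ek. assert (hi * INR n <= INR n) by (rewrite <- (Rmult_1_l (INR n)) at 2; apply Rmult_le_compat_r; lra). lra. }
  exists (INR k / INR n). split. now apply rat01_kn. split.
  - apply Rmult_lt_reg_r with (INR n); auto. unfold Rdiv. rewrite Rmult_assoc, Rinv_l by lra.
    rewrite Rmult_1_r, Ek.
    assert (lo * INR n < hi * INR n - 1).
    { assert (1 / INR n * INR n = 1) by (field; lra).
      assert ((hi - lo) * INR n > 1 / INR n * INR n) by (apply Rmult_lt_compat_r; lra). nra. }
    lra.
  - apply Rmult_le_reg_r with (INR n); auto. unfold Rdiv. rewrite Rmult_assoc, Rinv_l by lra.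
    rewrite Rmult_1_r, Ek. lra.
Qed.

Section Hom.
Context {A : MVAlgebra}.
Definition ishom (h : A -> R) : Prop :=
  (forall x, 0 <= h x <= 1) /\
  (forall x y, h (mv_oplus x y) = std_oplus (h x) (h y)) /\
  (forall x, h (mv_neg x) = std_neg (h x)) /\
  h mv_zero = 0.

Lemma std_hom_ishom F h : std_hom_with_kernel F h -> ishom h.
Proof. intros [H1 [H2 [H3 [H4 _]]]]. repeat split; auto; apply H1. Qed.

Variable h : A -> R.
Hypothesis Hh : ishom h.
Lemma h_range x : 0 <= h x <= 1. Proof. apply Hh. Qed.
Lemma h_oplus x y : h (mv_oplus x y) = Rmin (h x + h y) 1. Proof. apply Hh. Qed.
Lemma h_neg x : h (mv_neg x) = 1 - h x. Proof. apply Hh. Qed.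
Lemma h_zero : h mv_zero = 0. Proof. apply Hh. Qed.
Lemma h_one : h mv_one = 1. Proof. unfold mv_one. rewrite h_neg, h_zero. lra. Qed.
Lemma h_mult x y : h (mv_mult x y) = Rmax (h x + h y - 1) 0.
Proof. unfold mv_mult. rewrite h_neg, h_oplus, !h_neg. pose proof (h_range x); pose proof (h_range y). rmm. Qed.
Lemma h_impl x y : h (mv_impl x y) = Rmin (1 - h x + h y) 1.
Proof. unfold mv_impl. rewrite h_oplus, h_neg. reflexivity. Qed.
Lemma h_meet x y : h (mv_meet x y) = Rmin (h x) (h y).
Proof. unfold mv_meet. rewrite h_mult, h_impl. pose proof (h_range x); pose proof (h_range y). rmm. Qed.
Lemma h_join x y : h (mv_join x y) = Rmax (h x) (h y).
Proof. unfold mv_join. rewrite h_oplus, h_neg, h_oplus, h_neg. pose proof (h_range x); pose proof (h_range y). rmm. Qed.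
Lemma h_le x y : mv_le x y -> h x <= h y.
Proof. intros H. pose proof (f_equal h H) as E. rewrite h_impl, h_one in E. pose proof (h_range x); pose proof (h_range y). rmm. Qed.
Lemma h_pw x n : h (pw x n) = Rmax (INR n * h x - (INR n - 1)) 0.
Proof.
  induction n; simpl pw.
  - rewrite h_one. simpl. rmm.
  - rewrite h_mult, IHn, S_INR. pose proof (h_range x). pose proof (pos_INR n).
    unfold Rmax. repeat destruct Rle_dec; nra.
Qed.
End Hom.

Ltac hsimp h Hh := repeat first [ rewrite (h_oplus h Hh) | rewrite (h_neg h Hh) | rewrite (h_zero h Hh)
  | rewrite (h_one h Hh) | rewrite (h_mult h Hh) | rewrite (h_impl h Hh) | rewrite (h_meet h Hh) | rewrite (h_join h Hh) ].

Open Scope R_scope.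

Arguments mv_assoc {m}. Arguments mv_comm {m}. Arguments mv_zero_r {m}.
Arguments mv_negneg {m}. Arguments mv_one_abs {m}. Arguments mv_luk {m}.

Section Pav.
Context {A : PavelkaAlgebra}.

Definition cst (r : R) : A := pv_const A (epsilon (inhabits 0%Q) (fun q => unitQ q /\ Q2R q = r)).

Lemma cst_spec r : rat01 r -> exists q, unitQ q /\ Q2R q = r /\ cst r = pv_const A q.
Proof.
  intros H. pose proof (epsilon_spec (inhabits 0%Q) (fun q => unitQ q /\ Q2R q = r) H) as [H1 H2].
  eexists. split; [exact H1|split; [exact H2|reflexivity]].
Qed.

Lemma unitQ_0 : unitQ 0%Q. Proof. unfold unitQ. rewrite Q2R_0. lra. Qed.
Lemma unitQ_1 : unitQ 1%Q. Proof. unfold unitQ. rewrite Q2R_1. lra. Qed.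

Lemma pv_ext q1 q2 : unitQ q1 -> unitQ q2 -> Q2R q1 = Q2R q2 -> pv_const A q1 = pv_const A q2.
Proof.
  intros H1 H2 E. rewrite <- (pv_const_oplus A q1 0%Q q2 H1 unitQ_0 H2).
  - rewrite pv_const0. symmetry. apply mv_zero_r.
  - rewrite Q2R_0, Rplus_0_r, E. unfold unitQ in H2. unfold Rmin; destruct Rle_dec; lra.
Qed.

Lemma cst_of_q q : unitQ q -> cst (Q2R q) = pv_const A q.
Proof.
  intros Hq. destruct (cst_spec (Q2R q)) as [q' [H1 [H2 H3]]]. exists q; auto.
  rewrite H3. now apply pv_ext.
Qed.

Lemma cst_zero : cst 0 = mv_zero.
Proof. rewrite <- Q2R_0, cst_of_q by apply unitQ_0. apply pv_const0. Qed.
Lemma cst_one : cst 1 = mv_one.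
Proof.
  rewrite <- Q2R_1, cst_of_q by apply unitQ_1. unfold mv_one. rewrite <- pv_const0.
  symmetry. apply pv_const_neg. apply unitQ_0. apply unitQ_1. rewrite Q2R_0, Q2R_1. lra.
Qed.
Lemma cst_neg r : rat01 r -> mv_neg (cst r) = cst (1 - r).
Proof.
  intros Hr. pose proof (rat01_neg r Hr) as Hr'.
  destruct (cst_spec r Hr) as [q [H1 [H2 H3]]]. destruct (cst_spec (1 - r) Hr') as [p [G1 [G2 G3]]].
  rewrite H3, G3. apply pv_const_neg; auto. lra.
Qed.
Lemma cst_oplus r s : rat01 r -> rat01 s -> mv_oplus (cst r) (cst s) = cst (Rmin (r + s) 1).
Proof.
  intros Hr Hs. pose proof (rat01_oplus r s Hr Hs) as Ht.
  destruct (cst_spec r Hr) as [q [H1 [H2 H3]]]. destruct (cst_spec s Hs) as [p [G1 [G2 G3]]].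
  destruct (cst_spec _ Ht) as [o [K1 [K2 K3]]].
  rewrite H3, G3, K3. apply pv_const_oplus; auto. congruence.
Qed.
Lemma cst_mult r s : rat01 r -> rat01 s -> mv_mult (cst r) (cst s) = cst (Rmax (r + s - 1) 0).
Proof.
  intros Hr Hs. unfold mv_mult. rewrite !cst_neg by auto.
  rewrite cst_oplus by (apply rat01_neg; auto). rewrite cst_neg.
  - f_equal. apply rat01_range in Hr; apply rat01_range in Hs. rmm.
  - apply rat01_oplus; apply rat01_neg; auto.
Qed.
Lemma cst_pw r n : rat01 r -> pw (cst r) n = cst (Rmax (INR n * r - (INR n - 1)) 0)
  /\ rat01 (Rmax (INR n * r - (INR n - 1)) 0).
Proof.
  intros Hr. induction n as [|n [IH1 IH2]]; simpl pw.
  - simpl. replace (Rmax (0 * r - (0 - 1)) 0) with 1 by rmm. split. symmetry; apply cst_one. apply rat01_1.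
  - rewrite IH1, cst_mult by auto. pose proof (rat01_range r Hr). pose proof (pos_INR n).
    replace (Rmax (r + Rmax (INR n * r - (INR n - 1)) 0 - 1) 0) with (Rmax (INR (S n) * r - (INR (S n) - 1)) 0).
    split; auto. replace (Rmax (INR (S n) * r - (INR (S n) - 1)) 0) with (Rmax (r + Rmax (INR n * r - (INR n - 1)) 0 - 1) 0).
    apply rat01_mult; auto.
    all: rewrite S_INR; unfold Rmax; repeat destruct Rle_dec; nra.
Qed.

Lemma h_cst (h : A -> R) (Hh : ishom h) r : rat01 r -> h (cst r) = r.
Proof.
  intros Hr. destruct (rat01_inv r Hr) as [k [n [Hn [Hk ->]]]].
  assert (HnR : 0 < INR n) by (apply lt_0_INR; auto).
  set (u := h (cst (1 / INR n))).
  assert (H1n : rat01 (1 / INR n)) by (replace 1 with (INR 1) by reflexivity; apply rat01_kn; lia).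
  assert (Hu : 0 <= u <= 1) by apply (h_range h Hh).
  assert (Hj : forall j, (j <= n)%nat -> h (cst (INR j / INR n)) = Rmin (INR j * u) 1).
  { induction j; intros Hjn.
    - simpl. unfold Rdiv. rewrite Rmult_0_l, cst_zero, (h_zero h Hh). rmm.
    - replace (cst (INR (S j) / INR n)) with (mv_oplus (cst (INR j / INR n)) (cst (1 / INR n))).
      + rewrite (h_oplus h Hh), IHj by lia. fold u. rewrite S_INR. pose proof (pos_INR j). unfold Rmin; repeat destruct Rle_dec; nra.
      + rewrite cst_oplus; auto. f_equal. rewrite S_INR.
        assert (INR (S j) <= INR n) by (apply le_INR; auto). rewrite S_INR in H.
        unfold Rmin; destruct Rle_dec as [h0|h0]. field. lra. exfalso. apply h0.
        apply Rmult_le_reg_r with (INR n); auto. field_simplify; lra.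
        apply rat01_kn; lia. }
  assert (E1 : Rmin (INR n * u) 1 = 1).
  { rewrite <- Hj by lia. replace (INR n / INR n) with 1 by (field; lra). rewrite cst_one. apply (h_one h Hh). }
  assert (E2 : 1 - u = Rmin (INR (n - 1) * u) 1).
  { rewrite <- Hj by lia. unfold u. rewrite <- (h_neg h Hh). rewrite cst_neg by auto. f_equal. f_equal.
    rewrite minus_INR by lia. simpl. field. lra. }
  assert (Eu : INR n * u = 1).
  { rewrite minus_INR in E2 by lia. simpl in E2. unfold Rmin in *. repeat destruct Rle_dec; nra. }
  rewrite Hj by auto. assert (INR k <= INR n) by (apply le_INR; auto).
  assert (Hu' : u = 1 / INR n) by (apply Rmult_eq_reg_l with (INR n); [field_simplify; lra|lra]).
  rewrite Hu'. unfold Rmin. destruct Rle_dec as [h0|h0]. field. lra. exfalso. apply h0.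
  apply Rmult_le_reg_r with (INR n); auto. field_simplify; lra.
Qed.

Section MaxHom.
Variable F : A -> Prop.
Hypothesis HF : maximal_filter F.
Let Hfil : is_filter F := proj1 (proj1 HF).
Let Hprop : ~ F mv_zero := proj2 (proj1 HF).

Definition prec (a b : A) := F (mv_impl a b).
Lemma prec_le a b : mv_le a b -> prec a b.
Proof. intros H. unfold prec. rewrite H. now apply filter_one. Qed.
Lemma prec_trans a b c : prec a b -> prec b c -> prec a c.
Proof. intros H1 H2. unfold prec in *. apply filter_up with (F := F) (x := mv_mult (mv_impl a b) (mv_impl b c)); [exact Hfil| apply filter_mult; auto | apply impl_trans]. Qed.
Lemma prec_total a b : prec a b \/ prec b a.
Proof. apply max_prime, HF. Qed.
Lemma prec_oplus_l a b c : prec a b -> prec (mv_oplus a c) (mv_oplus b c).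
Proof. intros H. unfold prec in *. apply filter_up with (F := F) (x := mv_impl a b); [exact Hfil|exact H|apply impl_oplus]. Qed.
Lemma prec_oplus_r a b c : prec a b -> prec (mv_oplus c a) (mv_oplus c b).
Proof. intros H. rewrite (mv_comm c a), (mv_comm c b). now apply prec_oplus_l. Qed.
Lemma prec_neg a b : prec a b -> prec (mv_neg b) (mv_neg a).
Proof. unfold prec. now rewrite impl_neg. Qed.
Lemma prec_pw a b n : prec a b -> prec (pw a n) (pw b n).
Proof. intros H. unfold prec in *. apply filter_up with (F := F) (x := pw (mv_impl a b) n); [exact Hfil|apply filter_pw; auto|apply impl_pw]. Qed.

Lemma cst_prec r s : rat01 r -> rat01 s -> prec (cst r) (cst s) -> r <= s.
Proof.
  intros Hr Hs H. apply Rnot_lt_le. intros Hlt.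
  unfold prec, mv_impl in H. rewrite cst_neg, cst_oplus in H by (try apply rat01_neg; auto).
  set (t := Rmin (1 - r + s) 1) in *.
  assert (Ht : rat01 t) by (apply rat01_oplus; auto; apply rat01_neg; auto).
  assert (Htv : t = 1 - r + s) by (unfold t; apply rat01_range in Hr; apply rat01_range in Hs; rmm).
  destruct (archimed (/ (1 - t))) as [Hm _].
  assert (Hpos : 0 < / (1 - t)) by (apply Rinv_0_lt_compat; lra).
  set (m := Z.to_nat (up (/ (1 - t)))).
  assert (Em : INR m = IZR (up (/ (1 - t)))).
  { unfold m. rewrite INR_IZR_INZ. f_equal. apply Z2Nat.id. apply le_IZR. lra. }
  destruct (cst_pw t m Ht) as [Ep _].
  assert (Hv : Rmax (INR m * t - (INR m - 1)) 0 = 0).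
  { assert (INR m * (1 - t) > 1).
    { rewrite Em. assert (/ (1 - t) * (1 - t) = 1) by (field; lra). nra. }
    unfold Rmax; destruct Rle_dec; nra. }
  rewrite Hv, cst_zero in Ep. apply Hprop. rewrite <- Ep. now apply filter_pw.
Qed.

Definition Sx x r := rat01 r /\ prec (cst r) x.
Definition Tx x r := rat01 r /\ prec x (cst r).

Lemma ST_le x s t : Sx x s -> Tx x t -> s <= t.
Proof. intros [H1 H2] [G1 G2]. apply cst_prec; auto. eapply prec_trans; eauto. Qed.
Lemma ST_cover x r : rat01 r -> Sx x r \/ Tx x r.
Proof. intros Hr. destruct (prec_total (cst r) x); [left|right]; split; auto. Qed.
Lemma S0 x : Sx x 0.
Proof. split. apply rat01_0. rewrite cst_zero. apply prec_le, zero_le. Qed.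
Lemma T1 x : Tx x 1.
Proof. split. apply rat01_1. rewrite cst_one. apply prec_le, le_one. Qed.

Definition phi x := epsilon (inhabits 0) (is_lub (Sx x)).
Lemma phi_lub x : is_lub (Sx x) (phi x).
Proof.
  unfold phi. apply epsilon_spec. destruct (completeness (Sx x)) as [m Hm].
  - exists 1. intros r [Hr _]. apply rat01_range in Hr. lra.
  - exists 0. apply S0.
  - exists m; auto.
Qed.
Lemma phi_S x s : Sx x s -> s <= phi x.
Proof. intros H. apply (proj1 (phi_lub x)). auto. Qed.
Lemma phi_T x t : Tx x t -> phi x <= t.
Proof. intros H. apply (proj2 (phi_lub x)). intros s Hs. eapply ST_le; eauto. Qed.
Lemma phi_range x : 0 <= phi x <= 1.
Proof. split. apply phi_S, S0. apply phi_T, T1. Qed.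
Lemma phi_below x e : 0 < e -> exists s, Sx x s /\ phi x - e < s.
Proof.
  intros He. apply NNPP. intros Hn.
  assert (phi x <= phi x - e). { apply (proj2 (phi_lub x)). intros s Hs. apply Rnot_lt_le. intros h. apply Hn. eauto. }
  lra.
Qed.
Lemma phi_above x e : 0 < e -> exists t, Tx x t /\ t < phi x + e.
Proof.
  intros He. pose proof (phi_range x).
  destruct (Req_dec (phi x) 1) as [E|E].
  - exists 1. split. apply T1. lra.
  - destruct (density (phi x) (Rmin (phi x + e / 2) 1)) as [r [Hr [H1 H2]]]; try rmm.
    exists r. split. destruct (ST_cover x r Hr) as [h|h]; auto. apply phi_S in h. lra. rmm.
Qed.
Lemma phi_unique x y : (forall s, Sx x s -> s <= y) -> (forall t, Tx x t -> y <= t) -> y = phi x.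
Proof.
  intros H1 H2. destruct (Rtotal_order y (phi x)) as [h|[h|h]]; auto; exfalso.
  - destruct (phi_below x (phi x - y)) as [s [Hs Hs']]. lra. apply H1 in Hs. lra.
  - destruct (phi_above x (y - phi x)) as [t [Ht Ht']]. lra. apply H2 in Ht. lra.
Qed.

Lemma phi_neg x : phi (mv_neg x) = 1 - phi x.
Proof.
  symmetry. apply phi_unique.
  - intros s [Hs Hp]. apply prec_neg in Hp. rewrite mv_negneg, cst_neg in Hp by auto.
    assert (phi x <= 1 - s) by (apply phi_T; split; auto; apply rat01_neg; auto). lra.
  - intros t [Ht Hp]. apply prec_neg in Hp. rewrite mv_negneg, cst_neg in Hp by auto.
    assert (1 - t <= phi x) by (apply phi_S; split; auto; apply rat01_neg; auto). lra.
Qed.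

Lemma phi_oplus x y : phi (mv_oplus x y) = Rmin (phi x + phi y) 1.
Proof.
  pose proof (phi_range x); pose proof (phi_range y).
  symmetry. apply phi_unique.
  - intros s [Hs Hp]. pose proof (rat01_range s Hs).
    apply Rnot_lt_le. intros Hlt. assert (Hlt' : phi x + phi y < s) by rmm.
    set (e := (s - phi x - phi y) / 2).
    destruct (phi_above x e) as [t1 [[Ht1 Hp1] Ht1']]. unfold e; lra.
    destruct (phi_above y e) as [t2 [[Ht2 Hp2] Ht2']]. unfold e; lra.
    assert (prec (mv_oplus x y) (cst (Rmin (t1 + t2) 1))).
    { rewrite <- cst_oplus by auto. eapply prec_trans. apply prec_oplus_l, Hp1. apply prec_oplus_r, Hp2. }
    assert (s <= Rmin (t1 + t2) 1) by (apply cst_prec; auto; [apply rat01_oplus; auto| eapply prec_trans; eauto]).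
    unfold e in *. rmm.
  - intros t [Ht Hp]. pose proof (rat01_range t Ht).
    apply Rnot_lt_le. intros Hlt.
    set (e := (Rmin (phi x + phi y) 1 - t) / 2).
    destruct (phi_below x e) as [s1 [[Hs1 Hp1] Hs1']]. unfold e; lra.
    destruct (phi_below y e) as [s2 [[Hs2 Hp2] Hs2']]. unfold e; lra.
    assert (prec (cst (Rmin (s1 + s2) 1)) (mv_oplus x y)).
    { rewrite <- cst_oplus by auto. eapply prec_trans. apply prec_oplus_l, Hp1. apply prec_oplus_r, Hp2. }
    assert (Rmin (s1 + s2) 1 <= t) by (apply cst_prec; auto; [apply rat01_oplus; auto| eapply prec_trans; eauto]).
    unfold e in *. rmm.
Qed.

Lemma phi_zero : phi mv_zero = 0.
Proof.
  symmetry. apply phi_unique.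
  - intros s [Hs Hp]. rewrite <- cst_zero in Hp. apply cst_prec in Hp; auto. apply rat01_0.
  - intros t [Ht _]. apply rat01_range in Ht. lra.
Qed.

Lemma phi_kernel x : F x <-> phi x = 1.
Proof.
  split.
  - intros Hx. pose proof (phi_range x). assert (1 <= phi x); try lra.
    apply phi_S. split. apply rat01_1. unfold prec. rewrite cst_one, impl_one_l. auto.
  - intros E. apply NNPP. intros Hx.
    destruct (max_not_in F x HF Hx) as [f [n [Hf Hfe]]].
    destruct n as [|n].
    { simpl in Hfe. rewrite mult_one_r in Hfe. subst. auto. }
    assert (Hw : prec (pw x (S n)) mv_zero).
    { unfold prec. rewrite impl_zero_r. eapply filter_up; eauto.
      assert (mv_le (mv_mult f (pw x (S n))) mv_zero) by (rewrite Hfe; apply le_refl).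
      apply residuation in H. rewrite mv_zero_r in H. exact H. }
    set (N := INR (S n)).
    assert (HN : 1 <= N) by (unfold N; rewrite S_INR; pose proof (pos_INR n); lra).
    destruct (phi_below x (1 / (2 * N))) as [s [[Hs Hp] Hs']].
    { apply Rdiv_lt_0_compat; lra. }
    apply (prec_pw _ _ (S n)) in Hp.
    destruct (cst_pw s (S n) Hs) as [Ep Hv]. rewrite Ep in Hp.
    assert (Hc := prec_trans _ _ _ Hp Hw). rewrite <- cst_zero in Hc.
    apply cst_prec in Hc; auto; [|apply rat01_0].
    fold N in Hc. rewrite E in Hs'.
    assert (N * (1 / (2 * N)) = 1/2) by (field; lra).
    assert (N * s > N - 1/2) by nra.
    unfold Rmax in Hc; destruct Rle_dec in Hc; lra.
Qed.

Lemma max_hom_exists : exists h, std_hom_with_kernel F h.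
Proof.
  exists phi. split; [|split; [|split; [|split]]].
  - apply phi_range.
  - intros. apply phi_oplus.
  - intros. apply phi_neg.
  - apply phi_zero.
  - apply phi_kernel.
Qed.
End MaxHom.

Lemma qv_spec (F : SpecM A) : std_hom_with_kernel (proj1_sig F) (quot_val F).
Proof.
  unfold quot_val. apply epsilon_spec. apply max_hom_exists. apply (proj2_sig F).
Qed.
Lemma qv_hom (F : SpecM A) : ishom (quot_val F).
Proof. eapply std_hom_ishom. apply qv_spec. Qed.

Lemma separation (HS : mv_semisimple A) (x y : A) :
  (forall F : SpecM A, quot_val F x <= quot_val F y) -> mv_le x y.
Proof.
  intros Hxy. destruct HS as [I [B [h [Hsimp [Hhom [Hsurj Hinj]]]]]].
  apply NNPP. intros Hn.
  assert (Hi : exists i, h i (mv_impl x y) <> h i mv_one).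
  { apply NNPP. intros Hc. apply Hn. apply Hinj. intros i. apply NNPP. intros Hc'. apply Hc. eauto. }
  destruct Hi as [i Hi].
  destruct (Hhom i) as [hO [hN hZ]].
  assert (hOne : h i mv_one = mv_one) by (unfold mv_one; rewrite hN, hZ; reflexivity).
  assert (hM : forall a b, h i (mv_mult a b) = mv_mult (h i a) (h i b)) by (intros; unfold mv_mult; rewrite hN, hO, !hN; reflexivity).
  assert (hJ : forall a b, h i (mv_join a b) = mv_join (h i a) (h i b)) by (intros; unfold mv_join; rewrite hO, hN, hO, hN; reflexivity).
  assert (hI : forall a b, h i (mv_impl a b) = mv_impl (h i a) (h i b)) by (intros; unfold mv_impl; rewrite hO, hN; reflexivity).
  set (K := fun a => h i a = mv_one).
  assert (Kfil : is_filter K).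
  { split; [|split].
    - unfold K. auto.
    - intros a b Ha Hb. unfold K in *. rewrite hM, Ha, Hb. apply mult_one_r.
    - intros a b Ha Hab. unfold K in *. apply one_le. rewrite <- Ha. unfold mv_le in *.
      rewrite <- hI, Hab. auto. }
  destruct (Hsimp i) as [Hne Hs].
  assert (Kmax : maximal_filter K).
  { split. split; auto. unfold K. rewrite hZ. auto.
    intros F' [HF' HF'p] Hsub a Ha.
    set (Fb := fun b : B i => exists a', F' a' /\ h i a' = b).
    assert (Fbfil : is_filter Fb).
    { split; [|split].
      - exists mv_one. split; [apply filter_one; exact HF'|exact hOne].
      - intros b1 b2 [a1 [H1 E1]] [a2 [H2 E2]]. exists (mv_mult a1 a2). split. now apply filter_mult.
        rewrite hM; congruence.
      - intros b1 b2 [a1 [H1 E1]] Hb. destruct (Hsurj i b2) as [a2 E2].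
        exists (mv_join a1 a2). split. eapply filter_up; eauto. apply join_ub_l.
        rewrite hJ, E1, E2. subst. now apply le_join. }
    destruct (Hs Fb Fbfil) as [H1|H1].
    - destruct (proj1 (H1 (h i a))) as []. exists a; auto. unfold K. reflexivity.
    - exfalso. destruct (H1 mv_zero) as [a' [Ha' E]]. apply HF'p.
      assert (F' (mv_neg a')) by (apply Hsub; unfold K; rewrite hN, E; reflexivity).
      rewrite <- (mult_compl a'). now apply filter_mult. }
  set (Fm := exist _ K Kmax : SpecM A).
  pose proof (qv_spec Fm) as Hq. pose proof (qv_hom Fm) as Hh.
  destruct Hq as [_ [_ [_ [_ Hker]]]].
  assert (K (mv_impl x y)).
  { apply (Hker (mv_impl x y)). rewrite (h_impl _ Hh). specialize (Hxy Fm).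
    pose proof (h_range _ Hh x); pose proof (h_range _ Hh y). rmm. }
  apply Hi. rewrite H. now rewrite hOne.
Qed.

Lemma separation_eq (HS : mv_semisimple A) (x y : A) :
  (forall F : SpecM A, quot_val F x = quot_val F y) -> x = y.
Proof.
  intros H. apply le_antisym; apply separation; auto; intros F; rewrite H; lra.
Qed.

End Pav.

Open Scope R_scope.

Arguments mv_assoc {m}. Arguments mv_comm {m}. Arguments mv_zero_r {m}.
Arguments mv_negneg {m}. Arguments mv_one_abs {m}. Arguments mv_luk {m}.

Lemma Rinf_spec (S : R -> Prop) : (exists x, S x) -> (exists m, forall x, S x -> m <= x) -> is_inf S (Rinf S).
Proof.
  intros [x0 Hx0] [m Hm]. unfold Rinf. apply epsilon_spec.
  destruct (completeness (fun y => S (- y))) as [L [HL1 HL2]].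
  - exists (- m). intros y Hy. apply Hm in Hy. lra.
  - exists (- x0). now rewrite Ropp_involutive.
  - exists (- L). split.
    + intros x Hx. assert (- x <= L) by (apply HL1; now rewrite Ropp_involutive). lra.
    + intros m' Hm'. assert (L <= - m'). { apply HL2. intros y Hy. apply Hm' in Hy. lra. } lra.
Qed.

Section Frame.
Context {A : PavelkaAlgebra}.
Notation qv := quot_val.

Lemma qv_range (F : SpecM A) x : 0 <= qv F x <= 1.
Proof. apply (h_range _ (qv_hom F)). Qed.

Lemma fr_inf (G : A -> A) F F' :
  is_inf (fun v => exists a : A, v = std_impl (qv F' (G a)) (qv F a)) (frame_rel G F F').
Proof.
  apply Rinf_spec. exists (std_impl (qv F' (G mv_zero)) (qv F mv_zero)). eauto.
  exists 0. intros v [a ->]. pose proof (qv_range F' (G a)); pose proof (qv_range F a). rmm.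
Qed.
Lemma fr_le (G : A -> A) F F' a : frame_rel G F F' <= std_impl (qv F' (G a)) (qv F a).
Proof. apply (proj1 (fr_inf G F F')). eauto. Qed.
Lemma fr_ge (G : A -> A) F F' m : (forall a, m <= std_impl (qv F' (G a)) (qv F a)) -> m <= frame_rel G F F'.
Proof. intros H. apply (proj2 (fr_inf G F F')). intros v [a ->]. auto. Qed.
Lemma fr_range (G : A -> A) F F' : 0 <= frame_rel G F F' <= 1.
Proof.
  split. apply fr_ge. intros a. pose proof (qv_range F' (G a)); pose proof (qv_range F a). rmm.
  eapply Rle_trans. apply (fr_le G F F' mv_zero). unfold std_impl. apply Rmin_r.
Qed.

Lemma tense_swap G H : tense A G H -> tense A H G.
Proof. intros [a [b [c [d [e f]]]]]. repeat split; auto. Qed.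

Section Tense.
Variables G H : A -> A.
Hypothesis HT : tense A G H.
Hypothesis HS : mv_semisimple A.

Let PG1 := proj1 HT.
Let PG2 := proj1 (proj2 (proj2 HT)).
Let PH2 := proj1 (proj2 (proj2 (proj2 HT))).
Let PT3a := proj1 (proj2 (proj2 (proj2 (proj2 HT)))).
Let PT3b := proj2 (proj2 (proj2 (proj2 (proj2 HT)))).

Lemma G_mono x y : mv_le x y -> mv_le (G x) (G y).
Proof.
  intros Hxy. assert (E : mv_meet x y = x).
  { apply separation_eq; auto. intros F. rewrite (h_meet _ (qv_hom F)).
    pose proof (h_le _ (qv_hom F) _ _ Hxy). unfold Rmin; destruct Rle_dec; lra. }
  rewrite <- E, PG1. apply separation; auto. intros F. rewrite (h_meet _ (qv_hom F)). apply Rmin_r.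
Qed.

Lemma G_one : G mv_one = mv_one.
Proof.
  pose proof (PG2 0%Q mv_one unitQ_0) as E. rewrite pv_const0 in E. unfold mv_impl in E.
  fold (@mv_one A) in E. rewrite !one_l in E. auto.
Qed.

Lemma cst_q r : rat01 r -> exists q, unitQ q /\ @cst A r = pv_const A q.
Proof. intros Hr. destruct (@cst_spec A r Hr) as [q [H1 [H2 H3]]]. eauto. Qed.

Lemma G_oplus_c a r : rat01 r -> G (mv_oplus a (cst r)) = mv_oplus (G a) (cst r).
Proof.
  intros Hr. destruct (cst_q (1 - r)) as [q [Hq Eq]]. now apply rat01_neg.
  pose proof (PG2 q a Hq) as E. rewrite <- Eq in E. unfold mv_impl in E.
  rewrite cst_neg in E by (apply rat01_neg; auto). replace (1 - (1 - r)) with r in E by ring.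
  rewrite (mv_comm a), (mv_comm (G a)). auto.
Qed.

Lemma adj1 x : mv_le x (G (mv_neg (H (mv_neg x)))).
Proof.
  pose proof (PT3b (mv_neg x)) as Hb. apply neg_anti in Hb. rewrite !mv_negneg in Hb. exact Hb.
Qed.

Lemma P_mult_c r z : rat01 r -> mv_neg (H (mv_neg (mv_mult (cst r) z))) = mv_mult (cst r) (mv_neg (H (mv_neg z))).
Proof.
  intros Hr. destruct (cst_q r Hr) as [q [Hq Eq]].
  assert (E1 : mv_neg (mv_mult (cst r) z) = mv_impl (cst r) (mv_neg z)) by (unfold mv_mult, mv_impl; apply mv_negneg).
  rewrite E1, Eq, <- PH2 by auto. unfold mv_impl, mv_mult. rewrite mv_negneg. reflexivity.
Qed.

Lemma G_mult_c r a : rat01 r -> mv_le (mv_mult (cst r) (G a)) (G (mv_mult (cst r) a)).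
Proof.
  intros Hr. eapply le_trans. apply adj1. apply G_mono. rewrite P_mult_c by auto.
  apply mult_mono_r. apply PT3a.
Qed.

Lemma easy_bound F F' x : qv F' (G x) <= std_impl (frame_rel G F F') (qv F x).
Proof.
  pose proof (fr_le G F F' x). pose proof (fr_range G F F').
  pose proof (qv_range F' (G x)); pose proof (qv_range F x). rmm.
Qed.

Lemma duality F F' : frame_rel G F F' = frame_rel H F' F.
Proof.
  apply Rle_antisym.
  - apply fr_ge. intros b. eapply Rle_trans. apply (fr_le G F F' (mv_neg (H b))).
    pose proof (h_le _ (qv_hom F') _ _ (PT3b b)) as Hb.
    rewrite (h_neg _ (qv_hom F')) in Hb. rewrite (h_neg _ (qv_hom F)).
    pose proof (qv_range F' (G (mv_neg (H b)))); pose proof (qv_range F (H b)); pose proof (qv_range F' b). rmm.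
  - apply fr_ge. intros a. eapply Rle_trans. apply (fr_le H F' F (mv_neg (G a))).
    pose proof (h_le _ (qv_hom F) _ _ (PT3a a)) as Ha.
    rewrite (h_neg _ (qv_hom F)) in Ha. rewrite (h_neg _ (qv_hom F')).
    pose proof (qv_range F (H (mv_neg (G a)))); pose proof (qv_range F' (G a)); pose proof (qv_range F a). rmm.
Qed.

End Tense.
End Frame.

Open Scope R_scope.

Arguments mv_assoc {m}. Arguments mv_comm {m}. Arguments mv_zero_r {m}.
Arguments mv_negneg {m}. Arguments mv_one_abs {m}. Arguments mv_luk {m}.

Section EL.
Context {A : PavelkaAlgebra}.
Notation qv := quot_val.
Variables G H : A -> A.
Hypothesis HT : tense A G H.
Hypothesis HS : mv_semisimple A.

Definition plist (l : list A) : A := fold_right mv_mult mv_one l.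
Definition mlist (l : list A) : A := fold_right mv_meet mv_one l.

Lemma plist_app l1 l2 : plist (l1 ++ l2) = mv_mult (plist l1) (plist l2).
Proof. induction l1; simpl. now rewrite mult_one_l. rewrite IHl1. apply mult_assoc. Qed.

Lemma plist_lt1 (h : A -> R) (Hh : ishom h) l : h (plist l) < 1 -> exists d, In d l /\ h d < 1.
Proof.
  induction l as [|d l IH]; simpl; intros Hl.
  - rewrite (h_one h Hh) in Hl. lra.
  - rewrite (h_mult h Hh) in Hl. destruct (Rlt_dec (h d) 1) as [h1|h1]. eauto.
    destruct IH as [d' [H1 H2]]. pose proof (h_range h Hh d). pose proof (h_range h Hh (plist l)). rmm. eauto.
Qed.

Lemma mlist_le (h : A -> R) (Hh : ishom h) l d : In d l -> h (mlist l) <= h d.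
Proof.
  induction l as [|d' l IH]; simpl; intros Hin. contradiction.
  rewrite (h_meet h Hh). destruct Hin as [->|Hin]. apply Rmin_l. eapply Rle_trans. apply Rmin_r. auto.
Qed.

Lemma G_mlist (h : A -> R) (Hh : ishom h) l v : v <= 1 -> (forall d, In d l -> v <= h (G d)) -> v <= h (G (mlist l)).
Proof.
  intros Hv. induction l as [|d l IH]; simpl; intros Hall.
  - rewrite (G_one G H HT), (h_one h Hh). auto.
  - rewrite (proj1 HT), (h_meet h Hh). apply Rmin_glb; auto.
Qed.

Lemma EL (F' : SpecM A) (x : A) (delta : R) : 0 < delta ->
  exists F : SpecM A, std_impl (frame_rel G F F') (qv F x) <= qv F' (G x) + delta.
Proof.
  intros Hd. set (psi := qv F'). set (g := psi (G x)).
  pose proof (qv_hom F') as Hpsi. fold psi in Hpsi.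
  assert (Hg : 0 <= g <= 1) by (apply (h_range psi Hpsi)).
  destruct (Rle_dec 1 (g + delta)) as [Hbig|Hsmall].
  { exists F'. pose proof (fr_range G F' F'). pose proof (qv_range F' x). fold g psi. rmm. }
  apply Rnot_le_lt in Hsmall.
  set (d := delta / 2).
  set (cond := fun t : A * R * R => rat01 (snd (fst t)) /\ rat01 (snd t) /\
                 snd t + g + d <= Rmin (psi (G (fst (fst t))) + snd (fst t)) 1).
  set (gen := fun t : A * R * R => mv_impl (mv_oplus x (cst (snd t))) (mv_oplus (fst (fst t)) (cst (snd (fst t))))).
  set (yof := fun t : A * R * R => mv_mult (mv_oplus (fst (fst t)) (cst (snd (fst t)))) (cst (1 - snd t))).
  set (Phi0 := fun z => exists l, Forall cond l /\ mv_le (plist (map gen l)) z).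
  assert (HPhi0 : proper_filter Phi0).
  { split; [split; [|split]|].
    - exists nil. split. constructor. apply le_refl.
    - intros a b [l1 [C1 L1]] [l2 [C2 L2]]. exists (l1 ++ l2). split. apply Forall_app; auto.
      rewrite map_app, plist_app. now apply mult_mono.
    - intros a b [l1 [C1 L1]] Hab. exists l1. split; auto. eapply le_trans; eauto.
    - intros [l [Cl Ll]].
      set (y := mlist (map yof l)).
      assert (Hyx : mv_le y x).
      { apply separation; auto. intros Fs. set (chi := qv Fs). pose proof (qv_hom Fs) as Hchi. fold chi in Hchi.
        assert (Hp : chi (plist (map gen l)) < 1).
        { pose proof (h_le chi Hchi _ _ Ll). rewrite (h_zero chi Hchi) in H0. lra. }
        destruct (plist_lt1 chi Hchi _ Hp) as [dd [Hin Hlt]].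
        apply in_map_iff in Hin. destruct Hin as [t [<- Hint]].
        rewrite Forall_forall in Cl. destruct (Cl t Hint) as [Hp1 [Hq1 _]].
        eapply Rle_trans. apply (mlist_le chi Hchi). apply in_map, Hint.
        unfold gen, yof in *. destruct t as [[a p] q]. simpl in *.
        rewrite (h_impl chi Hchi), !(h_oplus chi Hchi) in Hlt.
        hsimp chi Hchi. rewrite !(h_cst chi Hchi) in * by (auto; apply rat01_neg; auto).
        pose proof (h_range chi Hchi a); pose proof (h_range chi Hchi x).
        apply rat01_range in Hp1; apply rat01_range in Hq1. rmm. }
      apply (G_mono G H HT HS) in Hyx. apply (h_le psi Hpsi) in Hyx. fold g in Hyx.
      assert (g + d <= psi (G y)).
      { apply G_mlist; auto. unfold d; lra. intros dd Hin. apply in_map_iff in Hin. destruct Hin as [t [<- Hint]].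
        rewrite Forall_forall in Cl. destruct (Cl t Hint) as [Hp1 [Hq1 Hc]].
        unfold yof. destruct t as [[a p] q]. simpl in *.
        rewrite mult_comm. eapply Rle_trans; [|apply (h_le psi Hpsi); apply (G_mult_c G H HT HS); apply rat01_neg; auto].
        rewrite (G_oplus_c G H HT) by auto. hsimp psi Hpsi. rewrite !(h_cst psi Hpsi) by (auto; apply rat01_neg; auto).
        pose proof (h_range psi Hpsi (G a)). apply rat01_range in Hp1; apply rat01_range in Hq1. rmm. }
      unfold d in *. lra. }
  destruct (zorn_filter Phi0 HPhi0) as [M [HM Hsub]].
  set (F := exist _ M HM : SpecM A).
  exists F. set (phi := qv F). pose proof (qv_hom F) as Hphi. fold phi in Hphi.
  destruct (qv_spec F) as [_ [_ [_ [_ Hker]]]]. fold phi in Hker. simpl in Hker.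
  assert (Hmem : forall t, cond t -> Rmin (phi x + snd t) 1 <= Rmin (phi (fst (fst t)) + snd (fst t)) 1).
  { intros t Ct. assert (Mg : M (gen t)).
    { apply Hsub. exists (t :: nil). split. constructor; auto. simpl. rewrite mult_one_r. apply le_refl. }
    apply Hker in Mg. unfold gen in Mg. destruct Ct as [Hp1 [Hq1 _]].
    rewrite (h_impl phi Hphi), !(h_oplus phi Hphi) in Mg. rewrite !(h_cst phi Hphi) in Mg by auto.
    pose proof (h_range phi Hphi (fst (fst t))); pose proof (h_range phi Hphi x).
    apply rat01_range in Hp1; apply rat01_range in Hq1. rmm. }
  assert (Hclaim : forall a, Rmin (phi x + psi (G a) - g - 2 * d) 1 <= phi a).
  { intros a. pose proof (h_range psi Hpsi (G a)). pose proof (h_range phi Hphi a). pose proof (h_range phi Hphi x).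
    assert (Hd2 : 0 < d) by (unfold d; lra).
    assert (Hgd : g + 2 * d < 1) by (unfold d; lra).
    set (beta := psi (G a) - g - d).
    assert (Hbeta : beta = psi (G a) - g - d) by reflexivity. clearbody beta.
    destruct (Rle_dec 0 beta) as [Hb|Hb].
    - destruct (density (beta - d) beta) as [q [Hq [Hq1 Hq2]]]; [lra|lra|lra|].
      pose proof (Hmem (a, 0, q)) as Hm. simpl in Hm.
      assert (cond (a, 0, q)). { unfold cond. simpl. split. apply rat01_0. split; auto. rmm. }
      specialize (Hm H3). rmm.
    - destruct (density (- beta) (Rmin (- beta + d) 1)) as [p [Hp [Hp1 Hp2]]]; [rmm|rmm|rmm|].
      pose proof (Hmem (a, p, 0)) as Hm. simpl in Hm.
      assert (cond (a, p, 0)). { unfold cond. simpl. split; auto. split. apply rat01_0. rmm. }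
      specialize (Hm H3). rmm. }
  assert (C0 : phi x <= g + 2 * d).
  { pose proof (Hclaim mv_zero). rewrite (h_zero phi Hphi) in H0. pose proof (h_range psi Hpsi (G mv_zero)). rmm. }
  assert (HR : Rmin (1 - g - 2 * d + phi x) 1 <= frame_rel G F F').
  { apply fr_ge. intros a. fold psi phi. pose proof (Hclaim a).
    pose proof (h_range psi Hpsi (G a)). pose proof (h_range phi Hphi a). pose proof (h_range phi Hphi x). rmm. }
  fold g. unfold d in *. pose proof (fr_range G F F'). pose proof (h_range phi Hphi x). rmm.
Qed.

End EL.

Open Scope R_scope.

Lemma le_eps (a b : R) : (forall d, 0 < d -> a <= b + d) -> a <= b.
Proof.
  intros H. apply Rnot_lt_le. intros Hlt. specialize (H ((a - b) / 2)). lra.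
Qed.

Section Main.
Context {A : PavelkaAlgebra}.
Notation qv := quot_val.

Lemma refl_iff (G H : A -> A) (HT : tense A G H) (HS : mv_semisimple A) :
  fz_reflexive (frame_rel G) <-> forall x : A, mv_le (G x) x.
Proof.
  split.
  - intros Hr x. apply separation; auto. intros F. pose proof (fr_le G F F x) as Hle.
    rewrite Hr in Hle. pose proof (qv_range F (G x)); pose proof (qv_range F x). rmm.
  - intros Hle F. apply Rle_antisym. apply fr_range. apply fr_ge. intros a.
    pose proof (h_le _ (qv_hom F) _ _ (Hle a)). pose proof (qv_range F (G a)); pose proof (qv_range F a). rmm.
Qed.

Lemma refl_GH (G H : A -> A) (HT : tense A G H) :
  fz_reflexive (frame_rel G) <-> fz_reflexive (frame_rel H).
Proof.
  unfold fz_reflexive. split; intros Hr F. rewrite <- (duality G H HT). auto.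
  rewrite (duality G H HT). auto.
Qed.

Lemma trans_iff (G H : A -> A) (HT : tense A G H) (HS : mv_semisimple A) :
  fz_transitive (frame_rel G) <-> forall x : A, mv_le (G x) (G (G x)).
Proof.
  split.
  - intros Htr x. apply separation; auto. intros F'. apply le_eps. intros d Hd.
    destruct (EL G H HT HS F' (G x) (d / 2)) as [F'' HF'']. lra.
    destruct (EL G H HT HS F'' x (d / 2)) as [F HF]. lra.
    pose proof (easy_bound G F F' x) as Heasy.
    pose proof (Htr F F'' F') as Ht.
    pose proof (fr_range G F F'); pose proof (fr_range G F F''); pose proof (fr_range G F'' F').
    pose proof (qv_range F x); pose proof (qv_range F'' (G x)); pose proof (qv_range F' (G (G x))); pose proof (qv_range F' (G x)).
    rmm.
  - intros Hgg s t u. apply fr_ge. intros a.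
    pose proof (fr_le G s t a) as H1. pose proof (fr_le G t u (G a)) as H2.
    pose proof (h_le _ (qv_hom u) _ _ (Hgg a)) as H3.
    pose proof (fr_range G s t); pose proof (fr_range G t u).
    pose proof (qv_range t (G a)); pose proof (qv_range s a); pose proof (qv_range u (G a)); pose proof (qv_range u (G (G a))).
    rmm.
Qed.

Lemma trans_GH (G H : A -> A) (HT : tense A G H) :
  fz_transitive (frame_rel G) <-> fz_transitive (frame_rel H).
Proof.
  unfold fz_transitive. split; intros Htr s t u.
  - rewrite <- !(duality G H HT). specialize (Htr u t s). unfold std_mult in *. rewrite Rplus_comm. auto.
  - rewrite !(duality G H HT). specialize (Htr u t s). unfold std_mult in *. rewrite Rplus_comm. auto.
Qed.

Lemma sym_iff (G H : A -> A) (HT : tense A G H) (HS : mv_semisimple A) :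
  fz_symmetric (frame_rel G) <-> H = G.
Proof.
  pose proof (tense_swap G H HT) as HT'.
  split.
  - intros Hsym. apply functional_extensionality. intros x. apply separation_eq; auto. intros F'.
    apply Rle_antisym; apply le_eps; intros d Hd.
    + destruct (EL G H HT HS F' x d Hd) as [F HF].
      pose proof (easy_bound H F F' x) as He.
      rewrite (duality H G HT'), Hsym in He. lra.
    + destruct (EL H G HT' HS F' x d Hd) as [F HF].
      pose proof (easy_bound G F F' x) as He.
      rewrite Hsym, (duality G H HT) in He. lra.
  - intros E s t. rewrite (duality G H HT). rewrite E. reflexivity.
Qed.

End Main.

Theorem theorem13 (A : PavelkaAlgebra) (G H : A -> A)
  (HT : tense A G H) (HS : mv_semisimple A) :
  ((fz_reflexive (frame_rel G) <-> forall x : A, mv_le (G x) x) /\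
   (fz_reflexive (frame_rel G) <-> forall x : A, mv_le (H x) x)) /\
  (fz_symmetric (frame_rel G) <-> H = G) /\
  ((fz_transitive (frame_rel G) <-> forall x : A, mv_le (G x) (G (G x))) /\
   (fz_transitive (frame_rel G) <-> forall x : A, mv_le (H x) (H (H x)))).
Proof.
  pose proof (tense_swap G H HT) as HT'.
  split; [split|split; [|split]].
  - apply refl_iff with H; auto.
  - rewrite (refl_GH G H HT). apply refl_iff with G; auto.
  - apply sym_iff; auto.
  - apply trans_iff with H; auto.
  - rewrite (trans_GH G H HT). apply trans_iff with G; auto.
Qed.
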